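(* Let $n=p_1^{m_1}\cdots p_k^{m_k}$ be neither prime nor the square of a prime, and let $T=\prod_{i=1}^k(m_i+1)-2$. Then $$\kappa(\mathcal E_{\mathbb Z_n})=\begin{cases}T-1,& k=1,\ m_1>2,\\ 1,& k>1,\ m_i=1\text{ for all }i,\\ m+\eta,& k>1,\ m_i>1\text{ for at least one }i,\end{cases}$$ where $m=\prod_{i=1}^k m_i-1$ and $\eta=\min_{1\le j\le k}\big|[\langle p_j^{m_j}\rangle]\big|=\min_{1\le j\le k}\prod_{i\ne j}m_i$.
   Context: Primes $p_1<\dots<p_k$, positive integers $m_i$. Nonzero proper ideals of $\mathbb Z_n$ are uniquely $\langle p_1^{r_1}\cdots p_k^{r_k}\rangle$, $0\le r_i\le m_i$, $(r_i)\ne(0,\dots,0),(m_1,\dots,m_k)$; essential iff $r_j\ne m_j$ for all $j$. The essential ideal graph $\mathcal E_{\mathbb Z_n}$: vertices the nonzero proper ideals, distinct $I,K$ adjacent iff $I+K$ essential. For a nonessential nonzero proper ideal $I$, $\Xi_I=\{i:r_i=m_i\}$ and $[I]$ is the set of nonessential nonzero proper ideals $J$ with $\Xi_J=\Xi_I$. $\kappa(\Gamma)$ is the vertex connectivity (minimum number of vertices whose removal disconnects $\Gamma$; $\kappa(K_t)=t-1$). *)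

(* Defs.v *)
From mathcomp Require Import all_boot all_order all_algebra.
Set Implicit Arguments. Unset Strict Implicit. Unset Printing Implicit Defensive.
Import GRing.Theory.

Definition induced_rel (T : finType) (W : {set T}) (e : rel T) : rel T :=
  [rel x y | [&& x \in W, y \in W & e x y]].

Definition separating (T : finType) (V : {set T}) (e : rel T) (S : {set T}) : bool :=
  let W := V :\: S in
  (#|W| <= 1) ||
  [exists u, exists v, [&& u \in W, v \in W & ~~ connect (induced_rel W e) u v]].

(* kappa(G) = minimum size of a set of vertices whose removal disconnects G
   (or leaves at most one vertex, so that kappa(K_t) = t - 1). *)
Definition vconn (T : finType) (V : {set T}) (e : rel T) : nat :=
  \big[minn/#|V|]_(S : {set T} | (S \subset V) && separating V e S) #|S|.

Section Zn.
Variable n : nat.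
Local Open Scope ring_scope.

Definition is_ideal (I : {set 'Z_n}) : bool :=
  [&& (0 : 'Z_n) \in I,
      [forall x, forall y, ((x \in I) && (y \in I)) ==> (x + y \in I)] &
      [forall a, forall x, (x \in I) ==> (a * x \in I)]].

Definition zero_ideal : {set 'Z_n} := [set (0 : 'Z_n)].

Definition is_essential (I : {set 'Z_n}) : bool :=
  is_ideal I &&
  [forall J : {set 'Z_n}, (is_ideal J && (J != zero_ideal)) ==> (I :&: J != zero_ideal)].

Definition ideal_vertices : {set {set 'Z_n}} :=
  [set I : {set 'Z_n} | [&& is_ideal I, I != zero_ideal & I != setT]].

Definition ideal_sum (I K : {set 'Z_n}) : {set 'Z_n} :=
  [set x + y | x in I, y in K].

Definition ess_adj : rel {set 'Z_n} :=
  [rel I K | (I != K) && is_essential (ideal_sum I K)].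

Definition principal (a : nat) : {set 'Z_n} := [set (a%:R : 'Z_n) * x | x : 'Z_n].

(* Xi_I = { p_i : r_i = m_i }, i.e. the primes p_i with I contained in <p_i^{m_i}> *)
Definition Xi (I : {set 'Z_n}) : seq nat :=
  [seq p <- primes n | I \subset principal (p ^ logn p n)%N].

Definition ideal_class (I : {set 'Z_n}) : {set {set 'Z_n}} :=
  [set J in ideal_vertices | ~~ is_essential J & Xi J == Xi I].

End Zn.

Definition kappaE (n : nat) : nat := vconn (ideal_vertices n) (@ess_adj n).

(* Main.v *)
Require Import Defs.
From mathcomp Require Import all_boot all_order all_algebra.
From mathcomp Require Import zify.
Set Implicit Arguments. Unset Strict Implicit. Unset Printing Implicit Defensive.
Import GRing.Theory.

Section Basics.
Variable n : nat.
Hypothesis n1 : 1 < n.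
Local Open Scope ring_scope.

Lemma n0 : (0 < n)%N. Proof. by apply: ltnW. Qed.

Lemma valZ (a : nat) : val (a%:R : 'Z_n) = (a %% n)%N.
Proof. exact: val_Zp_nat. Qed.

Lemma val_lt (x : 'Z_n) : (val x < n)%N.
Proof. by have := ltn_ord x; rewrite [X in (_ < X)%N -> _]Zp_cast. Qed.

Lemma natZ (x : 'Z_n) : (val x)%:R = x.
Proof. by apply: val_inj; rewrite valZ modn_small // val_lt. Qed.

Lemma eqZ (a b : nat) : ((a%:R : 'Z_n) == b%:R) = (a == b %[mod n])%N.
Proof. by rewrite -val_eqE /= !valZ. Qed.

Lemma Zdvd0 (a : nat) : (n %| a)%N -> (a%:R : 'Z_n) = 0.
Proof. by move=> h; apply: val_inj; rewrite valZ /=; apply/eqP. Qed.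

Lemma dvd_modn d a : (d %| n)%N -> (d %| a %% n)%N = (d %| a)%N.
Proof. by move=> h; rewrite /dvdn modn_dvdm. Qed.

Lemma mem_principalN d a :
  ((a%:R : 'Z_n) \in principal n d) = (gcdn d n %| a)%N.
Proof.
apply/imsetP/idP => [[x _ /eqP]|].
  rewrite -(natZ x) -natrM eqZ => /eqP h.
  rewrite -(dvd_modn _ (dvdn_gcdr _ _)) h dvd_modn ?dvdn_gcdr //.
  by apply: dvdn_mulr; apply: dvdn_gcdl.
case/dvdnP=> s ->.
have [u _ hu] := Bezoutl d n0.
rewrite gcdnC.
exists (- ((u * s)%:R)) => //.
rewrite mulrN -natrM; apply/eqP; rewrite eq_sym -subr_eq0 -opprD oppr_eq0 -natrD; apply/eqP.
apply: Zdvd0.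
by rewrite [X in (_ %| X)%N](_ : _ = (gcdn n d + u*d)*s)%N ?dvdn_mulr //; nia.
Qed.

Lemma mem_principal d (y : 'Z_n) :
  (y \in principal n d) = (gcdn d n %| val y)%N.
Proof. by rewrite -{1}(natZ y) mem_principalN. Qed.

End Basics.

Section Ideals.
Variable n : nat.
Hypothesis n1 : 1 < n.
Local Open Scope ring_scope.
Implicit Types I J K : {set 'Z_n}.

Lemma val_add (x y : 'Z_n) : val (x + y) = ((val x + val y) %% n)%N.
Proof. by rewrite -{1}(natZ n1 x) -{1}(natZ n1 y) -natrD valZ. Qed.

Lemma val_mul (x y : 'Z_n) : val (x * y) = ((val x * val y) %% n)%N.
Proof. by rewrite -{1}(natZ n1 x) -{1}(natZ n1 y) -natrM valZ. Qed.

Lemma is_ideal_principal d : is_ideal (principal n d).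
Proof.
apply/and3P; split.
- by rewrite mem_principal.
- apply/forallP=> x; apply/forallP=> y; apply/implyP=> /andP[].
  rewrite !mem_principal // val_add dvd_modn ?dvdn_gcdr //.
  exact: dvdn_add.
- apply/forallP=> a; apply/forallP=> x; apply/implyP.
  rewrite !mem_principal // val_mul dvd_modn ?dvdn_gcdr //.
  exact: dvdn_mull.
Qed.

Section OneIdeal.
Variable I : {set 'Z_n}.
Hypothesis hI : is_ideal I.

Lemma ideal0 : 0 \in I. Proof. by case/and3P: hI. Qed.
Lemma idealD x y : x \in I -> y \in I -> x + y \in I.
Proof.
case/and3P: hI => _ /forallP h _ hx hy.
by move/forallP: (h x) => /(_ y) /implyP; apply; rewrite hx.
Qed.
Lemma idealM a x : x \in I -> a * x \in I.
Proof.
case/and3P: hI => _ _ /forallP h hx.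
by move/forallP: (h a) => /(_ x) /implyP; apply.
Qed.
Lemma idealN x : x \in I -> - x \in I.
Proof. by move=> hx; rewrite -mulN1r idealM. Qed.

Lemma ideal_natM c a : (a%:R : 'Z_n) \in I -> ((c * a)%N%:R : 'Z_n) \in I.
Proof. by move=> h; rewrite natrM idealM. Qed.

Lemma ideal_gcd a b : (a%:R : 'Z_n) \in I -> (b%:R : 'Z_n) \in I ->
  ((gcdn a b)%:R : 'Z_n) \in I.
Proof.
case: (posnP a) => [-> _ //|a0 ha hb]; first by rewrite gcd0n.
have [x _ hx] := Bezoutl b a0.
case/dvdnP: hx => t ht.
have -> : ((gcdn a b)%:R : 'Z_n) = (t * a)%N%:R - (x * b)%N%:R.
  by rewrite -ht natrD addrK.
by rewrite idealD ?idealN ?ideal_natM.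
Qed.

Definition dv : nat := \big[gcdn/n]_(x in I) val x.

Lemma dv_mem : ((dv)%:R : 'Z_n) \in I.
Proof.
rewrite /dv; elim/big_ind: _.
- by rewrite (Zdvd0 n1 (dvdnn n)) ideal0.
- by move=> a b; apply: ideal_gcd.
- by move=> x hx; rewrite natZ.
Qed.

Lemma dv_dvd : (dv %| n)%N.
Proof.
rewrite /dv; elim/big_rec: _ => // x a _ ha.
exact: dvdn_trans (dvdn_gcdr _ _) ha.
Qed.

Lemma dv_dvdx x : x \in I -> (dv %| val x)%N.
Proof. by move=> hx; rewrite /dv (bigD1 x) //= dvdn_gcdl. Qed.

Lemma idealE : I = principal n dv.
Proof.
apply/setP=> y; rewrite mem_principal // (gcdn_idPl dv_dvd).
apply/idP/idP; first exact: dv_dvdx.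
case/dvdnP=> s hs; rewrite -(natZ n1 y) hs.
exact: ideal_natM dv_mem.
Qed.

End OneIdeal.
End Ideals.

Section NT.

Lemma NT1 n q d : 0 < n -> prime q -> d %| n -> ~~ (q ^ logn q n %| d) -> d * q %| n.
Proof.
move=> n0 pq dn nd.
have d0 : 0 < d := dvdn_gt0 n0 dn.
have ha : logn q d < logn q n by rewrite ltnNge -pfactor_dvdn.
have [d' cd' ed] := pfactor_coprime pq d0.
have [n' cn' en] := pfactor_coprime pq n0.
have hd' : d' %| n'.
  have : d' %| n' * q ^ logn q n by rewrite -en; apply: dvdn_trans dn; rewrite [X in _ %| X]ed dvdn_mulr.
  by rewrite Gauss_dvdl // coprime_sym coprimeXl.
rewrite {1}ed -mulnA -expnSr [X in _ %| X]en.
by apply: dvdn_mul => //; apply: dvdn_exp2l.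
Qed.

Lemma NT2 n q d : 0 < n -> prime q -> d * q %| n -> ~~ (q ^ logn q n %| d).
Proof.
move=> n0 pq h; apply/negP=> hd.
have : q ^ (logn q n).+1 %| n by rewrite expnSr; apply: dvdn_trans h; apply: dvdn_mul.
by rewrite pfactor_dvdn // ltnn.
Qed.

Lemma NT_cop n q : 0 < n -> prime q -> coprime (q ^ logn q n) (n %/ q ^ logn q n).
Proof.
move=> n0 pq; have [n' cn' en] := pfactor_coprime pq n0.
by rewrite {2}en mulnK ?expn_gt0 ?prime_gt0 // coprimeXl.
Qed.

Lemma NT_pq n p q : 0 < n -> prime p -> prime q -> p != q -> q %| n ->
  q ^ logn q n %| n %/ p ^ logn p n.
Proof.
move=> n0 pp pq npq qn.
have [n' cn' en] := pfactor_coprime pp n0.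
rewrite {2}en mulnK ?expn_gt0 ?prime_gt0 //.
have : q ^ logn q n %| n' * p ^ logn p n by rewrite -en pfactor_dvdnn.
rewrite Gauss_dvdl // coprimeXl // coprimeXr //.
by rewrite prime_coprime // dvdn_prime2 // eq_sym.
Qed.

End NT.

Section Principal.
Variable n : nat.
Hypothesis n1 : 1 < n.
Local Open Scope ring_scope.
Local Notation P := (principal n).

Lemma memP d (y : 'Z_n) : (d %| n)%N -> (y \in P d) = (d %| val y)%N.
Proof. by move=> h; rewrite mem_principal // (gcdn_idPl h). Qed.

Lemma subP d e : (d %| n)%N -> (e %| n)%N -> (P d \subset P e) = (e %| d)%N.
Proof.
move=> hd he; apply/subsetP/idP => [h|h y].
  have := h (d%:R); rewrite !memP // valZ // !dvd_modn //.
  by apply.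
by rewrite !memP // => /(dvdn_trans h).
Qed.

Lemma P_inj d e : (d %| n)%N -> (e %| n)%N -> P d = P e -> d = e.
Proof.
move=> hd he h; apply/eqP; rewrite eqn_dvd.
by rewrite -(subP hd he) -(subP he hd) h subxx.
Qed.

Lemma P_n : P n = zero_ideal n.
Proof.
apply/setP=> y; rewrite memP // inE; apply/idP/eqP => [h|->]; last by rewrite dvdn0.
apply: val_inj => /=; apply/eqP; rewrite -[val y](modn_small (val_lt n1 y)).
by rewrite /dvdn in h.
Qed.

Lemma P_1 : P 1 = setT.
Proof. by apply/setP=> y; rewrite memP ?dvd1n // inE. Qed.

Lemma P_zero d : (d %| n)%N -> (P d == zero_ideal n) = (d == n).
Proof.
move=> hd; rewrite -P_n; apply/eqP/eqP => [|->//]; exact: P_inj.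
Qed.

Lemma P_T d : (d %| n)%N -> (P d == setT) = (d == 1%N).
Proof.
move=> hd; rewrite -P_1; apply/eqP/eqP => [|->//]; apply: P_inj => //.
Qed.

Lemma P_sum a b : (a %| n)%N -> (b %| n)%N -> ideal_sum (P a) (P b) = P (gcdn a b).
Proof.
move=> ha hb; have hg : (gcdn a b %| n)%N by apply: dvdn_trans (dvdn_gcdl _ _) ha.
apply/setP=> y; rewrite memP //; apply/imset2P/idP.
  case=> x z; rewrite !memP // => hx hz ->.
  rewrite val_add // dvd_modn // dvdn_add //.
    exact: dvdn_trans (dvdn_gcdl _ _) hx.
  exact: dvdn_trans (dvdn_gcdr _ _) hz.
case/dvdnP=> s hs.
have a0 : (0 < a)%N := dvdn_gt0 (ltnW n1) ha.
have [x _ hx] := Bezoutl b a0.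
case/dvdnP: hx => t ht.
exists ((s * t * a)%N%:R) (- ((s * x * b)%N%:R)).
- by rewrite memP // valZ // dvd_modn // dvdn_mull.
- by rewrite memP // -mulN1r val_mul // valZ // dvd_modn // dvdn_mull // dvd_modn // dvdn_mull.
- rewrite -(natZ n1 y) hs; apply/eqP; rewrite eq_sym subr_eq -natrD; apply/eqP.
  congr (_%:R); rewrite -!mulnA -mulnDr ht; nia.
Qed.

End Principal.

Lemma pm_gt1 n p : p \in primes n -> 1 < p ^ logn p n.
Proof.
move=> h; have pp : prime p by move: h; rewrite mem_primes => /andP[].
by rewrite -{1}(expn0 p) ltn_exp2l ?prime_gt1 // logn_gt0.
Qed.

Lemma pm_dvd n p : p ^ logn p n %| n.
Proof. exact: pfactor_dvdnn. Qed.

Section Essential.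
Variable n : nat.
Hypothesis n1 : 1 < n.
Local Open Scope ring_scope.
Local Notation P := (principal n).

Lemma val0 (y : 'Z_n) : (n %| val y)%N -> y = 0.
Proof.
move=> h; apply: val_inj => /=; apply/eqP; rewrite -[val y](modn_small (val_lt n1 y)).
by rewrite /dvdn in h.
Qed.

Lemma valZ_small a : (a < n)%N -> val (a%:R : 'Z_n) = a.
Proof. by move=> h; rewrite valZ // modn_small. Qed.

Lemma essP d : (d %| n)%N -> is_essential (P d) = all (fun p => ~~ (p ^ logn p n %| d))%N (primes n).
Proof.
move=> hd; have n0 : (0 < n)%N := ltnW n1.
apply/idP/allP.
  case/andP=> _ /forallP he p pin; apply/negP => hp.
  have pp : prime p by move: pin; rewrite mem_primes => /andP[].
  set e := (n %/ p ^ logn p n)%N.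
  have hen : (e %| n)%N := dvdn_div (pm_dvd n p).
  have hz : P e != zero_ideal n.
    rewrite P_zero // neq_ltn ltn_Pdiv ?orbT //; exact: pm_gt1.
  move/implyP: (he (P e)); rewrite (is_ideal_principal n1).
  move=> /(_ hz) /negP; apply; apply/eqP/setP=> y; rewrite !inE !memP //.
  apply/idP/eqP => [/andP[hy1 hy2]|->]; last by rewrite !dvdn0.
  apply: val0; apply: (@dvdn_trans (p ^ logn p n * e)%N).
    by rewrite mulnC divnK // pm_dvd.
  by rewrite Gauss_dvd ?NT_cop // hy2 (dvdn_trans hp hy1).
move=> hall; apply/andP; split.
  by have h := is_ideal_principal n1 d; exact h.
apply/forallP => J; apply/implyP => /andP[hJ hJ0].
rewrite (idealE n1 hJ) in hJ0 *; set e := dv J in hJ0 *.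
have he : (e %| n)%N := dv_dvd J.
rewrite P_zero // in hJ0.
have e0 : (0 < e)%N := dvdn_gt0 n0 he.
have hne : (1 < n %/ e)%N.
  have h1 : (n %/ e != 1)%N.
    by apply: contraNneq hJ0 => h; rewrite -[X in _ == X](divnK he) h mul1n.
  have h0 : (0 < n %/ e)%N by rewrite divn_gt0 // dvdn_leq.
  by rewrite ltn_neqAle eq_sym h1 h0.
have [q pq hq] := pdivP hne.
have qn : (q %| n)%N := dvdn_trans hq (dvdn_div he).
have qin : q \in primes n by rewrite mem_primes pq n0 qn.
have hdq := NT1 n0 pq hd (hall q qin).
have heq : (e * q %| n)%N by rewrite mulnC -dvdn_divRL.
have q1 := prime_gt1 pq.
have hlt : (n %/ q < n)%N by rewrite ltn_Pdiv.
apply/negP => /eqP h.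
have : ((n %/ q)%N%:R : 'Z_n) \in P d :&: P e.
  by rewrite inE !memP // valZ_small // !dvdn_divRL // hdq heq.
rewrite h inE => /eqP /(congr1 val); rewrite valZ_small //= => h0.
have : (0 < n %/ q)%N by rewrite divn_gt0 ?prime_gt0 // dvdn_leq.
by rewrite h0.
Qed.

End Essential.

Definition full n p (I : {set 'Z_n}) : bool := I \subset principal n (p ^ logn p n).

Lemma filter1P (T : eqType) (f : pred T) (s : seq T) p : uniq s -> p \in s ->
  (filter f s == [:: p]) = f p && all (fun q => (q != p) ==> ~~ f q) s.
Proof.
move=> us ps; apply/eqP/andP => [h|[hp /allP ha]].
  have hp : p \in filter f s by rewrite h mem_seq1.
  split; first by move: hp; rewrite mem_filter => /andP[].
  apply/allP=> q qs; apply/implyP=> nqp; apply/negP=> fq.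
  have : q \in filter f s by rewrite mem_filter fq.
  by rewrite h mem_seq1 (negbTE nqp).
rewrite -(filter_pred1_uniq us ps); apply: eq_in_filter => q qs /=.
case: (eqVneq q p) => [->//|nqp].
by have := ha q qs; rewrite nqp /= => /negbTE.
Qed.

Section IdealLevel.
Variable n : nat.
Hypothesis n1 : 1 < n.
Local Notation P := (principal n).
Local Notation ps := (primes n).
Implicit Types I J K : {set 'Z_n}.

Lemma fullE I p : is_ideal I -> full p I = (p ^ logn p n %| dv I).
Proof. by move=> hI; rewrite /full {1}(idealE n1 hI) subP ?pm_dvd ?dv_dvd. Qed.

Lemma fullP d p : d %| n -> full p (P d) = (p ^ logn p n %| d).
Proof. by move=> hd; rewrite /full subP ?pm_dvd. Qed.

Lemma essI I : is_ideal I -> is_essential I = all (fun p => ~~ full p I) ps.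
Proof.
move=> hI; rewrite {1}(idealE n1 hI) essP ?dv_dvd //.
by apply: eq_all => p; rewrite fullE.
Qed.

Lemma adjI I K : is_ideal I -> is_ideal K ->
  ess_adj I K = (I != K) && all (fun p => ~~ (full p I && full p K)) ps.
Proof.
move=> hI hK; rewrite /ess_adj /=; congr (_ && _).
rewrite {1}(idealE n1 hI) {1}(idealE n1 hK) P_sum ?dv_dvd // essP //; last first.
  exact: dvdn_trans (dvdn_gcdl _ _) (dv_dvd _).
by apply: eq_all => p; rewrite dvdn_gcd !fullE.
Qed.

Lemma adj_sym I K : is_ideal I -> is_ideal K -> ess_adj I K = ess_adj K I.
Proof.
move=> hI hK; rewrite !adjI // eq_sym; congr (_ && _).
by apply: eq_all => p; rewrite andbC.
Qed.

Lemma vert_ideal I : I \in ideal_vertices n -> is_ideal I.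
Proof. by rewrite inE => /and3P[]. Qed.

Lemma vert_notfull I : I \in ideal_vertices n -> exists2 q, q \in ps & ~~ full q I.
Proof.
move=> hV; have hI := vert_ideal hV.
move: hV; rewrite inE => /and3P[_ hz _].
have n0 : 0 < n := ltnW n1.
set d := dv I; have hd : d %| n := dv_dvd I.
rewrite (idealE n1 hI) P_zero // in hz.
have d0 : 0 < d := dvdn_gt0 n0 hd.
have hne : 1 < n %/ d.
  have h1 : n %/ d != 1.
    by apply: contraNneq hz => h; rewrite -[X in _ == X](divnK hd) h mul1n.
  have h0 : 0 < n %/ d by rewrite divn_gt0 // dvdn_leq.
  by rewrite ltn_neqAle eq_sym h1 h0.
have [q pq hq] := pdivP hne.
have qn : q %| n := dvdn_trans hq (dvdn_div hd).
exists q; first by rewrite mem_primes pq n0 qn.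
rewrite fullE //; apply: (NT2 n0 pq).
by rewrite mulnC -dvdn_divRL.
Qed.

Lemma Xi_pm p : p \in ps -> Xi (P (p ^ logn p n)) = [:: p].
Proof.
move=> pin; apply/eqP; rewrite /Xi.
have pp : prime p by move: pin; rewrite mem_primes => /andP[].
rewrite filter1P ?primes_uniq // subxx /=.
apply/allP=> q qin; apply/implyP=> nqp.
have pq : prime q by move: qin; rewrite mem_primes => /andP[].
rewrite subP ?pm_dvd //; apply/negP=> h.
have : q %| p ^ logn p n.
  apply: dvdn_trans h; apply: dvdn_exp => //; rewrite logn_gt0 //.
by rewrite Euclid_dvdX // dvdn_prime2 // (negbTE nqp).
Qed.

Lemma classP p J : p \in ps ->
  (J \in ideal_class (P (p ^ logn p n))) =
  [&& J \in ideal_vertices n, full p J & all (fun q => (q != p) ==> ~~ full q J) ps].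
Proof.
move=> pin; rewrite inE Xi_pm // /Xi filter1P ?primes_uniq //.
case hV: (J \in ideal_vertices n) => //=.
rewrite /full; case hf: (J \subset P (p ^ logn p n)) => //=; last by rewrite andbF.
have -> // : ~~ is_essential J.
rewrite essI ?vert_ideal //; apply/allPn; exists p => //.
by rewrite /full hf.
Qed.

End IdealLevel.

Section Generic.
Variable T : finType.

Lemma bigmin_le_cond (I : eqType) (r : seq I) (P : pred I) (F : I -> nat) x i0 :
  i0 \in r -> P i0 -> \big[minn/x]_(i <- r | P i) F i <= F i0.
Proof.
elim: r => // a r IH; rewrite inE big_cons => /orP[/eqP->|hi] hP.
  by rewrite hP geq_minl.
by case: (P a); rewrite ?geq_min IH ?orbT.
Qed.

Lemma vconn_eq (V : {set T}) (e : rel T) c :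
  c <= #|V| -> (exists S : {set T}, [/\ S \subset V, separating V e S & #|S| = c]) ->
  (forall S : {set T}, S \subset V -> #|S| < c -> ~~ separating V e S) -> vconn V e = c.
Proof.
move=> hc [S0 [h1 h2 h3]] hl; apply/eqP; rewrite eqn_leq; apply/andP; split.
  by rewrite -h3; apply: bigmin_le_cond; rewrite ?mem_index_enum ?h1.
rewrite /vconn; elim/big_ind: _ => //.
  by move=> x y hx hy; rewrite leq_min hx hy.
move=> S /andP[hS hsep]; rewrite leqNgt; apply/negP=> hlt.
by move: (hl S hS hlt); rewrite hsep.
Qed.

Lemma isolated_connect (r : rel T) x y : (forall z, ~~ r x z) -> connect r x y -> x = y.
Proof.
move=> h /connectP [[|z p] /= hp ->] //.
by case/andP: hp => hxz _; move: (h z); rewrite hxz.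
Qed.

Lemma bigmin_le (I : eqType) (s : seq I) (F : I -> nat) x p :
  p \in s -> \big[minn/x]_(q <- s) F q <= F p.
Proof.
elim: s => // a s IH; rewrite inE big_cons => /orP[/eqP->|hp].
  exact: geq_minl.
by rewrite geq_min IH ?orbT.
Qed.

Lemma bigmin_attain (I : eqType) (s : seq I) (F : I -> nat) x :
  s != [::] -> (forall q, q \in s -> F q <= x) ->
  exists2 p, p \in s & \big[minn/x]_(q <- s) F q = F p.
Proof.
elim: s => // a s IH _ hF; rewrite big_cons.
case: (eqVneq s [::]) => [->|ns].
  by exists a; rewrite ?mem_head // big_nil; apply/minn_idPl; apply: hF; rewrite mem_head.
have [p ps ->] := IH ns (fun q hq => hF q (mem_behead (s := a :: s) hq)).
case: (leqP (F a) (F p)) => h.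
  by exists a; rewrite ?mem_head //; apply/minn_idPl.
by exists p; rewrite ?inE ?ps ?orbT //; apply/minn_idPr; apply: ltnW.
Qed.

End Generic.

Definition Uset n := [set I in ideal_vertices n | is_essential I].

Section Graph.
Variable n : nat.
Hypothesis n1 : 1 < n.
Hypothesis hk : 1 < size (primes n).
Local Notation P := (principal n).
Local Notation ps := (primes n).
Local Notation V := (ideal_vertices n).
Local Notation U := (Uset n).
Local Notation C p := (ideal_class (P (p ^ logn p n))).

Lemma n0' : 0 < n. Proof. exact: ltnW. Qed.

Lemma other p : exists2 q, q \in ps & q != p.
Proof.
have := primes_uniq n; move: hk; case: ps => [|a [|b t]] //= _.
rewrite inE negb_or => /andP[/andP[nab _] _].
case: (eqVneq p a) => [->|npa]; first by exists b; rewrite ?inE ?eqxx ?orbT // eq_sym.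
by exists a; rewrite ?inE ?eqxx // eq_sym.
Qed.

Lemma prime_ps p : p \in ps -> prime p.
Proof. by rewrite mem_primes => /andP[]. Qed.

Lemma UP I : (I \in U) = (I \in V) && all (fun p => ~~ full p I) ps.
Proof.
rewrite inE; case hV: (I \in V) => //=; by rewrite essI ?vert_ideal.
Qed.

Lemma U_adj I J : I \in U -> J \in V -> I != J -> ess_adj I J.
Proof.
rewrite UP => /andP[hI /allP ha] hJ nIJ.
rewrite adjI ?vert_ideal // nIJ /=; apply/allP=> p hp.
by rewrite (negbTE (ha p hp)).
Qed.

Lemma CC_adj p q J K : p \in ps -> q \in ps -> p != q ->
  J \in C p -> K \in C q -> ess_adj J K.
Proof.
move=> hp hq npq; rewrite !classP // => /and3P[hJ fJ /allP aJ] /and3P[hK fK /allP aK].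
rewrite adjI ?vert_ideal //; apply/andP; split.
  apply: contraNneq npq => eJK.
  by move: (aK p hp); rewrite -eJK fJ implybF negbK.
apply/allP=> r hr; apply/negP=> /andP[h1 h2].
have e1 : r = p by apply/eqP; move: (aJ r hr); rewrite h1 implybF negbK.
have e2 : r = q by apply/eqP; move: (aK r hr); rewrite h2 implybF negbK.
by move: npq; rewrite -e1 -e2 eqxx.
Qed.

Lemma w_adj w q s : w \in V -> q \in ps -> ~~ full q w -> s \in C q -> ess_adj w s.
Proof.
move=> hw hq nf; rewrite classP // => /and3P[hs fs /allP a].
rewrite adjI ?vert_ideal //; apply/andP; split.
  by apply: contraNneq nf => ->.
apply/allP=> r hr; apply/negP=> /andP[h1 h2].
have e : r = q by apply/eqP; move: (a r hr); rewrite h2 implybF negbK.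
by move: h1; rewrite e (negbTE nf).
Qed.

Lemma pm_vert p : p \in ps -> P (p ^ logn p n) \in C p.
Proof.
move=> hp; have pp := prime_ps hp.
have := Xi_pm n1 hp; move/eqP; rewrite /Xi filter1P ?primes_uniq // => /andP[_ a].
rewrite classP //; apply/and3P; split; last 2 first.
- by rewrite /full subxx.
- exact: a.
rewrite inE (is_ideal_principal n1) P_zero ?pm_dvd // P_T ?pm_dvd //=.
have -> : p ^ logn p n != 1 by rewrite neq_ltn (pm_gt1 hp) orbT.
rewrite andbT; apply/eqP=> e.
have [q hq nqp] := other p.
have pq := prime_ps hq.
have : q %| p ^ logn p n by rewrite e; move: hq; rewrite mem_primes => /and3P[].
by rewrite Euclid_dvdX // dvdn_prime2 // (negbTE nqp).
Qed.


Lemma x0P p : p \in ps ->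
  [/\ P (n %/ p ^ logn p n) \in V, ~~ full p (P (n %/ p ^ logn p n)) &
      forall q, q \in ps -> q != p -> full q (P (n %/ p ^ logn p n))].
Proof.
move=> hp; have pp := prime_ps hp; have n0 := n0'.
set d0 := n %/ p ^ logn p n.
have hd0 : d0 %| n := dvdn_div (pm_dvd n p).
have hq q : q \in ps -> q != p -> full q (P d0).
  move=> hq nqp; rewrite fullP //; apply: NT_pq => //; first exact: prime_ps.
    by rewrite eq_sym.
  by move: hq; rewrite mem_primes => /and3P[].
split => //.
- rewrite inE (is_ideal_principal n1) P_zero // P_T //=.
  rewrite neq_ltn ltn_Pdiv ?pm_gt1 //=.
  have [q hq' nqp] := other p.
  apply/eqP=> e; move: (hq q hq' nqp); rewrite fullP // e dvdn1 => /eqP h1.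
  by move: (pm_gt1 hq'); rewrite h1.
- rewrite fullP //; apply: (NT2 n0 pp).
  rewrite -[X in _ %| X](divnK (pm_dvd n p)) -/d0; apply: dvdn_mul => //.
  by apply: dvdn_exp => //; rewrite logn_gt0.
Qed.

Lemma x0_nbr p y : p \in ps -> y \in V -> y \notin U ->
  ess_adj (P (n %/ p ^ logn p n)) y -> y \in C p.
Proof.
move=> hp hy hU; have [hx nfp fq] := x0P hp.
rewrite adjI ?vert_ideal // => /andP[_ /allP ha].
have hfull q : q \in ps -> q != p -> ~~ full q y.
  by move=> hq nqp; move: (ha q hq); rewrite fq.
move: hU; rewrite UP hy /= => /allPn [r hr]; rewrite negbK => fr.
have erp : r = p.
  by case: (eqVneq r p) => // nrp; move: (hfull r hr nrp); rewrite fr.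
rewrite classP // hy -erp fr /=; apply/allP=> q hq; apply/implyP=> nq.
by apply: hfull; rewrite // -erp.
Qed.

Lemma UC_disj p : p \in ps -> U :&: C p = set0.
Proof.
move=> hp; apply/setP=> I; rewrite in_setI UP classP // in_set0.
apply/negP=> /andP[/andP[_ /allP a] /and3P[_ f _]].
by move: (a p hp); rewrite f.
Qed.

Lemma CC_disj p q : p \in ps -> q \in ps -> p != q -> C p :&: C q = set0.
Proof.
move=> hp hq npq; apply/setP=> I; rewrite in_setI !classP // in_set0.
apply/negP=> /andP[/and3P[_ f _] /and3P[_ _ /allP a]].
by move: (a p hp); rewrite npq f.
Qed.

Lemma CV p : p \in ps -> C p \subset V.
Proof. by move=> hp; apply/subsetP=> I; rewrite classP // => /and3P[]. Qed.

Lemma UV : U \subset V.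
Proof. by apply/subsetP=> I; rewrite UP => /andP[]. Qed.

End Graph.

Section Main2.
Variable n : nat.
Hypothesis n1 : 1 < n.
Hypothesis hk : 1 < size (primes n).
Local Notation P := (principal n).
Local Notation ps := (primes n).
Local Notation V := (ideal_vertices n).
Local Notation U := (Uset n).
Local Notation C p := (ideal_class (P (p ^ logn p n))).

Lemma ind_sym (W : {set {set 'Z_n}}) : W \subset V -> symmetric (induced_rel W (@ess_adj n)).
Proof.
move=> hW x y.
change ([&& x \in W, y \in W & @ess_adj n x y] = [&& y \in W, x \in W & @ess_adj n y x]).
case hx: (x \in W); case hy: (y \in W) => //.
by rewrite !andTb adj_sym // vert_ideal // (subsetP hW).
Qed.

Lemma cardUC p : p \in ps -> #|U :|: C p| = #|U| + #|C p|.
Proof. by move=> hp; rewrite cardsU UC_disj // cards0 subn0. Qed.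

Theorem kappa_main : kappaE n = #|U| + \big[minn/#|V|]_(p <- ps) #|C p|.
Proof.
set eta := \big[minn/#|V|]_(p <- ps) #|C p|.
have ps_ne : ps != [::] by move: hk; case: ps.
have [pst hpst heta] := @bigmin_attain _ ps (fun p => #|C p|) #|V| ps_ne
   (fun q hq => subset_leq_card (CV n1 hq)).
have {}heta : eta = #|C pst| := heta.
have etale p : p \in ps -> eta <= #|C p| by move=> hp; apply: bigmin_le.
have hS0V : U :|: C pst \subset V by rewrite subUset UV // CV.
apply: vconn_eq.
- by rewrite heta -cardUC // subset_leq_card.
- exists (U :|: C pst); split => //; last by rewrite cardUC // heta.
  have [hx nfp fq] := x0P n1 hk hpst.
  set x0 := P (n %/ pst ^ logn pst n) in hx nfp fq *.
  rewrite /separating; set W := V :\: (U :|: C pst).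
  have hxU : x0 \notin U.
    apply/negP; rewrite UP // => /andP[_ /allP a]; have [q hq nqp] := other hk pst.
    by move: (a q hq); rewrite fq.
  have hxC : x0 \notin C pst.
    by apply/negP; rewrite classP // => /and3P[_ f _]; move: nfp; rewrite f.
  have hxW : x0 \in W by rewrite in_setD in_setU negb_or hxU hxC hx.
  case: (leqP #|W| 1) => //= hW.
  have [y hyW nyx] : exists2 y, y \in W & y != x0.
    have [a [b [ha hb nab]]] := card_gt1P hW.
    case: (eqVneq a x0) => [eax|nax]; last by exists a.
    by exists b => //; rewrite -eax eq_sym.
  apply/existsP; exists x0; apply/existsP; exists y; rewrite hxW hyW /=.
  apply/negP=> /isolated_connect h.
  have : x0 = y.
    apply: h => z /=; apply/negP=> /and3P[_ hz hadj].
    move: hz; rewrite in_setD in_setU negb_or => /andP[/andP[hzU hzC] hzV].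
    by move: hzC; rewrite (x0_nbr n1 hk hpst hzV hzU hadj).
  by move=> e; move: nyx; rewrite e eqxx.
- move=> S hSV hlt.
  set W := V :\: S.
  have hWV : W \subset V by apply: subsetDl.
  have [p1 hp1 np1] := other hk pst.
  have h1 : 0 < #|C p1| by apply/card_gt0P; exists (P (p1 ^ logn p1 n)); apply: pm_vert.
  set X := U :|: C pst :|: C p1.
  have hXV : X \subset V by rewrite !subUset UV // !CV.
  have cX : #|X| = #|U| + #|C pst| + #|C p1|.
    have npst : pst != p1 by rewrite eq_sym.
    by rewrite cardsU cardUC // setIUl UC_disj // (CC_disj n1 hpst hp1 npst) setU0 cards0 subn0.
  have hW2 : 1 < #|W|.
    have : #|X :\: S| <= #|W| by apply: subset_leq_card; apply: setSD.
    rewrite cardsD; move: (subset_leq_card (subsetIr X S)).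
    have := etale _ hpst; rewrite -heta; lia.
  have hsym := ind_sym hWV.
  suff [c hc hcon] : exists2 c, c \in W & forall w, w \in W -> connect (induced_rel W (@ess_adj n)) w c.
    rewrite /separating negb_or -ltnNge hW2 /=.
    apply/existsPn=> u; apply/existsPn=> v; apply/negP=> /and3P[hu hv /negP]; apply.
    apply: connect_trans (hcon u hu) _.
    by rewrite (sym_connect_sym hsym); apply: hcon.
  case: (boolP (U \subset S)) => [hUS|/subsetPn [u0 hu0 hu0S]]; last first.
    have hu0W : u0 \in W by rewrite in_setD hu0S (subsetP (UV n1)).
    exists u0 => // w hw; case: (eqVneq w u0) => [->|nwu]; first exact: connect0.
    apply: connect1; change ([&& w \in W, u0 \in W & @ess_adj n w u0]).
    rewrite hw hu0W !andTb adj_sym ?vert_ideal ?(subsetP hWV) //.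
    by apply: U_adj => //; [rewrite (subsetP hWV) | rewrite eq_sym].
  have surv p : p \in ps -> exists2 s, s \in C p & s \in W.
    move=> hp.
    have : #|U :|: (C p :&: S)| <= #|S| by apply: subset_leq_card; rewrite subUset hUS subsetIr.
    rewrite cardsU setIA UC_disj // set0I cards0 subn0 => hcs.
    have hlt' : #|C p :&: S| < #|C p| by have := etale _ hp; lia.
    have /subsetPn [s hs hsS] : ~~ (C p \subset S).
      by apply: contraTN hlt' => /setIidPl ->; rewrite ltnn.
    by exists s => //; rewrite in_setD hsS (subsetP (CV n1 hp)).
  have [c hcC hcW] := surv pst hpst.
  exists c => // w hw.
  have hwV : w \in V := subsetP hWV w hw.
  have [q hq nfq] := vert_notfull n1 hwV.
  have [s hsC hsW] := surv q hq.
  have ws : connect (induced_rel W (@ess_adj n)) w s.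
    apply: connect1; change ([&& w \in W, s \in W & @ess_adj n w s]).
    by rewrite hw hsW !andTb; apply: (w_adj n1 hwV hq nfq hsC).
  case: (eqVneq q pst) => [eq|nq].
    have [c1 hc1C hc1W] := surv p1 hp1.
    rewrite eq in hsC.
    apply: connect_trans ws _; apply: (@connect_trans _ _ c1); apply: connect1.
      change ([&& s \in W, c1 \in W & @ess_adj n s c1]).
      by rewrite hsW hc1W !andTb; apply: (CC_adj n1 hpst hp1 _ hsC hc1C); rewrite eq_sym.
    change ([&& c1 \in W, c \in W & @ess_adj n c1 c]).
    by rewrite hc1W hcW !andTb; apply: (CC_adj n1 hp1 hpst np1 hc1C hcC).
  apply: connect_trans ws (connect1 _).
  change ([&& s \in W, c \in W & @ess_adj n s c]).
  by rewrite hsW hcW !andTb; apply: (CC_adj n1 hq hpst nq hsC hcC).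
Qed.

End Main2.

Lemma logn_prod (I : Type) (r : seq I) (P : pred I) (F : I -> nat) q :
  (forall i, 0 < F i) ->
  logn q (\prod_(i <- r | P i) F i) = \sum_(i <- r | P i) logn q (F i).
Proof.
move=> hF; elim: r => [|a r IH]; first by rewrite !big_nil logn1.
rewrite !big_cons; case: (P a) => //.
by rewrite lognM ?IH ?hF // prodn_gt0.
Qed.

Lemma dvdn_logn a b : 0 < a -> 0 < b -> (forall q, logn q a <= logn q b) -> a %| b.
Proof.
move=> a0 b0 h; apply/dvdn_partP => // p; rewrite mem_primes => /and3P[pp _ _].
by rewrite p_part pfactor_dvdn.
Qed.

Lemma logn_le_n p n : 0 < n -> logn p n < n.+1.
Proof.
move=> n0; case: (posnP (logn p n)) => [->//|lp].
have pp : prime p by move: lp; rewrite logn_gt0 mem_primes => /andP[].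
apply: (@leq_ltn_trans (p ^ logn p n)); last by rewrite ltnS dvdn_leq // pfactor_dvdnn.
exact/ltnW/ltn_expl/prime_gt1.
Qed.

Lemma card_lt N a : a <= N -> #|[pred j : 'I_N | j < a]| = a.
Proof.
move=> aN.
transitivity #|[set widen_ord aN i | i : 'I_a]|.
  apply: eq_card => j; rewrite inE /=; apply/idP/imsetP => [hj|[i _ ->]]; last by rewrite /= ltn_ord.
  by exists (Ordinal hj) => //; apply: val_inj.
by rewrite card_imset ?card_ord // => i j /(congr1 val) /= /val_inj.
Qed.

Lemma card_eqv N a : a < N -> #|[pred j : 'I_N | val j == a]| = 1.
Proof.
move=> aN; rewrite -(card1 (Ordinal aN)); apply: eq_card => j.
by rewrite !inE.
Qed.

Lemma foldr_prod (T : finType) (g : T -> nat) : foldr muln 1 [seq g x | x : T] = \prod_(x : T) g x.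
Proof. by rewrite /image_mem foldrE big_map big_enum. Qed.

Section Count.
Variable n : nat.
Hypothesis n1 : 1 < n.
Local Notation ps := (primes n).
Local Notation k := (size (primes n)).
Local Notation pr i := (nth 0 (primes n) i).
Local Notation P := (principal n).
Local Notation V := (ideal_vertices n).
Local Notation U := (Uset n).
Local Notation fT := {ffun 'I_k -> 'I_n.+1}.

Definition Ef (f : fT) : nat := \prod_(i < k) pr i ^ f i.
Definition logvec (d : nat) : fT := [ffun i : 'I_k => inord (logn (pr i) d)].

Lemma nn0 : 0 < n. Proof. exact: ltnW. Qed.

Lemma pr_in (i : 'I_k) : pr i \in ps.
Proof. exact: mem_nth. Qed.

Lemma pr_prime (i : 'I_k) : prime (pr i).
Proof. by have := pr_in i; rewrite mem_primes => /andP[]. Qed.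

Lemma pr_inj (i j : 'I_k) : (pr i == pr j) = (i == j).
Proof. by rewrite nth_uniq ?primes_uniq. Qed.

Lemma Ef_gt0 f : 0 < Ef f.
Proof. by rewrite prodn_gt0 // => i; rewrite expn_gt0 prime_gt0 ?pr_prime. Qed.

Lemma logEq q f : logn q (Ef f) = \sum_(i < k) f i * (q == pr i).
Proof.
rewrite logn_prod => [|i]; last by rewrite expn_gt0 prime_gt0 ?pr_prime.
by apply: eq_bigr => i _; rewrite lognX logn_prime ?pr_prime.
Qed.

Lemma logE (i : 'I_k) f : logn (pr i) (Ef f) = f i.
Proof.
rewrite logEq (bigD1 i) //= eqxx muln1 big1 ?addn0 // => j nji.
by rewrite pr_inj eq_sym (negbTE nji) muln0.
Qed.

Lemma logE_out q f : q \notin ps -> logn q (Ef f) = 0.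
Proof.
move=> hq; rewrite logEq big1 // => j _.
have : q != pr j by apply: contraNneq hq => ->; apply: pr_in.
by move/negbTE ->; rewrite muln0.
Qed.

Definition bounded (f : fT) := [forall i, f i <= logn (pr i) n].

Lemma Ef_dvd f : bounded f -> Ef f %| n.
Proof.
move=> /forallP hb; apply: dvdn_logn; rewrite ?Ef_gt0 ?nn0 // => q.
case: (boolP (q \in ps)) => [hq|hq]; last by rewrite logE_out.
have hi : index q ps < k by rewrite index_mem.
have := logE (Ordinal hi) f; rewrite /= nth_index // => ->.
by have := hb (Ordinal hi); rewrite /= nth_index.
Qed.

Lemma logvecE d (i : 'I_k) : d %| n -> logvec d i = logn (pr i) d :> nat.
Proof.
move=> hd; rewrite ffunE inordK //.
apply: leq_ltn_trans (dvdn_leq_log _ nn0 hd) _; exact: logn_le_n nn0.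
Qed.

Lemma logvec_bounded d : d %| n -> bounded (logvec d).
Proof. by move=> hd; apply/forallP=> i; rewrite logvecE // dvdn_leq_log ?nn0. Qed.

Lemma Ef_logvec d : d %| n -> Ef (logvec d) = d.
Proof.
move=> hd; have d0 : 0 < d := dvdn_gt0 nn0 hd.
have hl q : logn q (Ef (logvec d)) = logn q d.
  case: (boolP (q \in ps)) => [hq|hq].
    have hi : index q ps < k by rewrite index_mem.
    by have := logE (Ordinal hi) (logvec d); rewrite /= nth_index // => ->; rewrite logvecE // /= nth_index.
  rewrite logE_out //; apply/esym/eqP; rewrite -leqn0 leqNgt logn_gt0.
  apply: contra hq; rewrite !mem_primes => /and3P[-> _ qd] /=.
  by rewrite nn0 (dvdn_trans qd hd).
apply/eqP; rewrite eqn_dvd !dvdn_logn ?Ef_gt0 // => q; by rewrite hl.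
Qed.

Lemma Ef_inj f g : bounded f -> bounded g -> P (Ef f) = P (Ef g) -> f = g.
Proof.
move=> hf hg /(P_inj n1 (Ef_dvd hf) (Ef_dvd hg)) h.
by apply/ffunP=> i; apply: val_inj; rewrite /= -(logE i f) -(logE i g) h.
Qed.

Lemma full_Ef (i : 'I_k) f : bounded f -> full (pr i) (P (Ef f)) = (logn (pr i) n <= f i).
Proof.
by move=> hf; rewrite fullP ?Ef_dvd // pfactor_dvdn ?pr_prime ?Ef_gt0 // logE.
Qed.

End Count.

Section Count2.
Variable n : nat.
Hypothesis n1 : 1 < n.
Local Notation ps := (primes n).
Local Notation k := (size (primes n)).
Local Notation pr i := (nth 0 (primes n) i).
Local Notation P := (principal n).
Local Notation V := (ideal_vertices n).
Local Notation U := (Uset n).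
Local Notation C p := (ideal_class (P (p ^ logn p n))).
Local Notation fT := {ffun 'I_k -> 'I_n.+1}.

Lemma setT_notV : setT \notin V.
Proof. by rewrite inE eqxx !andbF. Qed.

Lemma prod_ps (F : nat -> nat) : \prod_(i < k) F (pr i) = \prod_(p <- ps) F p.
Proof. by rewrite (big_nth 0) big_mkord. Qed.

Lemma prod_ps_cond (F : nat -> nat) p :
  \prod_(i < k | pr i != p) F (pr i) = \prod_(q <- ps | q != p) F q.
Proof. by rewrite (big_nth 0) big_mkord. Qed.

Lemma full_all f q : bounded f -> q \in ps ->
  exists2 i : 'I_k, pr i = q & full q (P (Ef f)) = (logn q n <= f i).
Proof.
move=> hf hq; have hi : index q ps < k by rewrite index_mem.
exists (Ordinal hi); rewrite /= ?nth_index //.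
by have := full_Ef n1 (Ordinal hi) hf; rewrite /= nth_index.
Qed.

Lemma full_vec d (i : 'I_k) : d %| n -> full (pr i) (P d) = (logn (pr i) n <= logvec n d i).
Proof.
move=> hd; rewrite fullP // pfactor_dvdn ?(dvdn_gt0 (ltnW n1) hd) //; first by rewrite logvecE.
exact: pr_prime.
Qed.

Lemma cardU : #|U| = \prod_(p <- ps) logn p n - 1.
Proof.
pose FamA := [set f : fT | [forall i, f i < logn (pr i) n]].
have bA f : f \in FamA -> bounded f.
  by rewrite inE => /forallP h; apply/forallP=> i; apply: ltnW.
have img : setT |: U = [set P (Ef f) | f in FamA].
  apply/setP=> I; rewrite in_setU1; apply/idP/imsetP.
    case/orP=> [/eqP->|hU].
      exists [ffun i => ord0].
        by rewrite inE; apply/forallP=> i; rewrite ffunE /= logn_gt0 pr_in.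
      rewrite -P_1 //; congr (principal n _); rewrite /Ef big1 // => i _.
      by rewrite ffunE expn0.
    move: hU; rewrite UP // => /andP[hV /allP hall].
    have hI := vert_ideal hV; have hd := dv_dvd I.
    exists (logvec n (dv I)); last by rewrite Ef_logvec // -(idealE n1 hI).
    rewrite inE; apply/forallP=> i; rewrite ltnNge -full_vec //.
    by rewrite -(idealE n1 hI) hall ?pr_in.
  case=> f hf ->.
  have hb := bA f hf; have hd := Ef_dvd n1 hb.
  have nf : all (fun q => ~~ full q (P (Ef f))) ps.
    apply/allP=> q hq; have [i <- ->] := full_all hb hq.
    by move: hf; rewrite inE => /forallP /(_ i); rewrite ltnNge.
  case: (eqVneq (Ef f) 1) => [->|ne1]; first by rewrite P_1 // eqxx.
  rewrite UP // nf andbT orbC /= inE (is_ideal_principal n1) P_T // ne1 andbT /=.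
  apply/orP; left; apply/negP=> /eqP h0.
  have k0 : 0 < k by rewrite lt0n size_eq0 primes_eq0 -leqNgt.
  move/allP: nf => /(_ (pr (Ordinal k0)) (pr_in _)).
  by rewrite h0 -P_n // fullP // pm_dvd.
have card_img : #|[set P (Ef f) | f in FamA]| = #|FamA|.
  by apply: card_in_imset => f g hf hg; apply: Ef_inj => //; apply: bA.
have cFam : #|FamA| = \prod_(p <- ps) logn p n.
  rewrite -prod_ps.
  transitivity #|family (fun i : 'I_k => [pred j : 'I_n.+1 | j < logn (pr i) n])|.
    apply: eq_card => f; rewrite inE; apply/forallP/familyP => h i; exact: h.
  rewrite card_family foldr_prod; apply: eq_bigr => i _; apply: card_lt.
  exact/ltnW/logn_le_n/ltnW.
have := cardsU1 setT U; rewrite img card_img cFam.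
have -> : (setT \notin U) = true.
  by apply/negP=> h; move: setT_notV; rewrite (subsetP (UV n1) _ h).
by rewrite add1n => ->; rewrite subn1.
Qed.

Lemma cardC p : 1 < k -> p \in ps -> #|C p| = \prod_(q <- ps | q != p) logn q n.
Proof.
move=> hk hp.
pose F (i : 'I_k) := [pred j : 'I_n.+1 | if pr i == p then val j == logn (pr i) n else j < logn (pr i) n].
pose FamB := [set f : fT | [forall i, f i \in F i]].
have bB f : f \in FamB -> bounded f.
  rewrite inE => /forallP h; apply/forallP=> i; move: (h i); rewrite inE /=.
  by case: (pr i == p) => [/eqP->|/ltnW].
have img : C p = [set P (Ef f) | f in FamB].
  apply/setP=> J; apply/idP/imsetP.
    rewrite classP // => /and3P[hV fp /allP ha].
    have hI := vert_ideal hV; have hd := dv_dvd J.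
    exists (logvec n (dv J)); last by rewrite Ef_logvec // -(idealE n1 hI).
    rewrite inE; apply/forallP=> i; rewrite inE /=.
    case: (eqVneq (pr i) p) => [e|ne].
      rewrite eqn_leq -full_vec // -(idealE n1 hI) e fp andbT logvecE //.
      by rewrite -e; apply: dvdn_leq_log => //; exact: ltnW.
    rewrite ltnNge -full_vec // -(idealE n1 hI).
    by have := ha (pr i) (pr_in i); rewrite ne.
  case=> f hf ->.
  have hb := bB f hf; have hd := Ef_dvd n1 hb.
  have hfi i : f \in FamB -> f i \in F i by rewrite inE => /forallP.
  have fp : full p (P (Ef f)).
    have [i ei ->] := full_all hb hp.
    by move: (hfi i hf); rewrite inE /= ei eqxx => /eqP->.
  have nf : all (fun q => (q != p) ==> ~~ full q (P (Ef f))) ps.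
    apply/allP=> q hq; apply/implyP=> nqp; have [i ei ->] := full_all hb hq.
    by move: (hfi i hf); rewrite inE /= ei (negbTE nqp) ltnNge.
  rewrite classP // fp nf andbT andbT inE (is_ideal_principal n1) /=.
  apply/andP; split.
    apply/negP=> /eqP h0; have [q hq nqp] := other hk p.
    move/allP: nf => /(_ q hq); rewrite nqp h0 -P_n // fullP // pm_dvd //.
  apply/negP=> /eqP hT; move: fp; rewrite hT -P_1 // fullP // dvdn1.
  by move/eqP=> e1; move: (pm_gt1 hp); rewrite e1.
have card_img : #|[set P (Ef f) | f in FamB]| = #|FamB|.
  by apply: card_in_imset => f g hf hg; apply: Ef_inj => //; apply: bB.
rewrite img card_img -(prod_ps_cond (fun q => logn q n)).
transitivity #|family F|.
  by apply: eq_card => f; rewrite inE; apply/forallP/familyP => h i; exact: h.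
rewrite card_family foldr_prod [RHS]big_mkcond; apply: eq_bigr => i _.
have hl : logn (pr i) n < n.+1 by apply/logn_le_n/ltnW.
case: (eqVneq (pr i) p) => [e|ne] /=.
  rewrite -(card_eqv hl); apply: eq_card => j; rewrite unfold_in /= e eqxx; rewrite unfold_in; done.
transitivity #|[pred j : 'I_n.+1 | j < logn (pr i) n]|; last exact: card_lt (ltnW hl).
apply: eq_card => j; rewrite unfold_in /= (negbTE ne); rewrite unfold_in; done.
Qed.

End Count2.

Section Final.
Variable n : nat.
Hypothesis n1 : 1 < n.
Local Notation ps := (primes n).
Local Notation P := (principal n).
Local Notation V := (ideal_vertices n).
Local Notation U := (Uset n).
Local Notation C p := (ideal_class (P (p ^ logn p n))).

Lemma notsep_U (S : {set {set 'Z_n}}) u : S \subset V -> 1 < #|V :\: S| -> u \in U -> u \notin S ->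
  ~~ separating V (@ess_adj n) S.
Proof.
move=> hSV hW hu huS; set W := V :\: S.
have hWV : W \subset V by apply: subsetDl.
have hsym := ind_sym n1 hWV.
have huW : u \in W by rewrite in_setD huS (subsetP (UV n1)).
have hcon w : w \in W -> connect (induced_rel W (@ess_adj n)) w u.
  move=> hw; case: (eqVneq w u) => [->|nwu]; first exact: connect0.
  apply: connect1; change ([&& w \in W, u \in W & @ess_adj n w u]).
  rewrite hw huW !andTb adj_sym ?vert_ideal ?(subsetP hWV) //.
  by apply: U_adj => //; [rewrite (subsetP hWV) | rewrite eq_sym].
rewrite /separating negb_or -ltnNge hW /=.
apply/existsPn=> a; apply/existsPn=> b; apply/negP=> /and3P[ha hb /negP]; apply.
apply: connect_trans (hcon a ha) _.
by rewrite (sym_connect_sym hsym); apply: hcon.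
Qed.

Lemma kappa_one p : ps = [:: p] -> 2 < logn p n -> kappaE n = logn p n - 2.
Proof.
move=> hps hm.
have hU := cardU n1; rewrite hps big_seq1 in hU.
have hVU : V = U.
  apply/eqP; rewrite eqEsubset UV // andbT; apply/subsetP=> I hI.
  rewrite UP // hI andTb; have [q hq nq] := vert_notfull n1 hI.
  move: hq; rewrite hps inE => /eqP eq; by rewrite /= andbT -eq.
have hV : #|V| = logn p n - 1 by rewrite hVU.
apply: vconn_eq.
- by rewrite hV; apply: leq_sub2l.
- have : 0 < #|V| by rewrite hV; lia.
  case/card_gt0P=> v hv.
  exists (V :\ v); split.
  + exact: subsetDl.
  + rewrite /separating; apply/orP; left.
    rewrite -(cards1 v); apply: subset_leq_card; apply/subsetP=> x.
    by rewrite !inE negb_and negbK => /andP[/orP[->//|/negbTE->]].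
  + by have := cardsD1 v V; rewrite hv hV; lia.
- move=> S hSV hlt.
  have hW : 1 < #|V :\: S|.
    by rewrite cardsD (setIidPr hSV); move: hlt; rewrite hV; lia.
  have [u hu] : exists u, u \in V :\: S by apply/card_gt0P; lia.
  move: hu; rewrite in_setD => /andP[huS huV].
  have huU : u \in U by rewrite -hVU.
  exact: notsep_U hSV hW huU huS.
Qed.

End Final.

Theorem mainTheorem16 (n : nat) :
  1 < n -> ~~ prime n -> ~~ [exists p : 'I_n.+1, prime p && (n == p ^ 2)] ->
  let ps := primes n in
  let k := size ps in
  let T := (\prod_(p <- ps) (logn p n).+1) - 2 in
  let m := (\prod_(p <- ps) logn p n) - 1 in
  let eta := \big[minn/#|ideal_vertices n|]_(p <- ps)
               #|ideal_class (principal n (p ^ logn p n))| in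
  [/\ (forall p, ps = [:: p] -> 2 < logn p n -> kappaE n = T - 1),
      (1 < k -> all (fun p => logn p n == 1) ps -> kappaE n = 1) &
      (1 < k -> has (fun p => 1 < logn p n) ps ->
         kappaE n = m + eta /\
         eta = \big[minn/#|ideal_vertices n|]_(p <- ps)
                  \prod_(q <- ps | q != p) logn q n)].
Proof.
move=> n1 _ _ ps k T m eta; split.
- move=> p hps hm; rewrite (kappa_one n1 hps hm) /T hps big_seq1; lia.
- move=> hk /allP hall; rewrite (kappa_main n1 hk) (cardU n1).
  rewrite big1_seq ?subnn ?add0n; last by move=> p /andP[_ hp]; apply/eqP; apply: hall.
  have ps_ne : primes n != [::] by rewrite -size_eq0 -lt0n; exact: ltnW hk.
  have [pst hpst ->] := @bigmin_attain _ (primes n) (fun p => #|ideal_class (principal n (p ^ logn p n))|)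
     #|ideal_vertices n| ps_ne (fun q hq => subset_leq_card (CV n1 hq)).
  rewrite (cardC n1 hk hpst) big1_seq // => q /andP[_ hq]; apply/eqP; apply: hall; exact: hq.
- move=> hk _; split; first by rewrite (kappa_main n1 hk) (cardU n1).
  by apply: eq_big_seq => p hp; apply: cardC.
Qed.
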